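(* Let $R$ be an integral domain, $J$ an ideal of $R$ and $f(X)\in R[X]$ a monic polynomial of degree at least $1$. Then the ideal $I = J R[X] + f(X)R[X]$ of $R[X]$ is power stable; moreover $I^t\cap R = J^t$ for all $t\geq 1$.
   Context: An ideal $I$ of the polynomial ring $R[X]$ over an integral domain $R$ is called power stable if $I^t\cap R = (I\cap R)^t$ for all integers $t\geq 1$. *)

(* Defs.v *)
From HB Require Import structures.
From mathcomp Require Import all_boot all_order all_algebra.
Set Implicit Arguments. Unset Strict Implicit. Unset Printing Implicit Defensive.
Import GRing.Theory.
Local Open Scope ring_scope.

Definition is_ideal (A : comRingType) (I : A -> Prop) : Prop :=
  [/\ I 0, (forall x y, I x -> I y -> I (x + y)) &
      (forall r x, I x -> I (r * x))].

Definition ideal_gen (A : comRingType) (S : A -> Prop) : A -> Prop :=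
  fun x => exists (n : nat) (r s : 'I_n -> A),
    (forall i, S (s i)) /\ x = \sum_(i < n) r i * s i.

Definition ideal_mul (A : comRingType) (I J : A -> Prop) : A -> Prop :=
  fun x => exists (n : nat) (a b : 'I_n -> A),
    (forall i, I (a i) /\ J (b i)) /\ x = \sum_(i < n) a i * b i.

Fixpoint ideal_pow (A : comRingType) (I : A -> Prop) (t : nat) : A -> Prop :=
  match t with
  | 0%N => fun _ => True
  | t'.+1 => ideal_mul (ideal_pow I t') I
  end.

Definition contraction (R : comRingType) (I : {poly R} -> Prop) : R -> Prop :=
  fun c => I c%:P.

Definition set_eq (T : Type) (A B : T -> Prop) : Prop := forall x, A x <-> B x.

Definition power_stable (R : idomainType) (I : {poly R} -> Prop) : Prop :=
  forall t : nat, (1 <= t)%N ->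
    set_eq (contraction (ideal_pow I t)) (ideal_pow (contraction I) t).

Definition ext_plus_principal (R : comRingType) (J : R -> Prop) (f : {poly R})
  : {poly R} -> Prop :=
  ideal_gen (fun p => (exists c, J c /\ p = c%:P) \/ p = f).

(* Main.v *)
Require Import Defs.
From HB Require Import structures.
From mathcomp Require Import all_boot all_order all_algebra.
Set Implicit Arguments. Unset Strict Implicit. Unset Printing Implicit Defensive.
Import GRing.Theory.
Local Open Scope ring_scope.

Section Aux.
Variable R : comRingType.

Lemma ideal_sum (A : R -> Prop) n (F : 'I_n -> R) :
  is_ideal A -> (forall i, A (F i)) -> A (\sum_(i < n) F i).
Proof.
case=> A0 AD _ HF; elim: n F HF => [|n IH] F HF; first by rewrite big_ord0.
rewrite big_ord_recr /=; apply: AD; last exact: HF.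
exact: IH.
Qed.

Lemma ideal_opp (A : R -> Prop) x : is_ideal A -> A x -> A (- x).
Proof. by case=> _ _ AM Ax; rewrite -mulN1r; apply: AM. Qed.

Lemma ideal_mul_ideal (A B : R -> Prop) : is_ideal B -> is_ideal (ideal_mul A B).
Proof.
case=> B0 BD BM; split.
- by exists 0%N, (fun _ => 0), (fun _ => 0); split; [case|rewrite big_ord0].
- move=> x y [n [a [b [Hab ->]]]] [m [a' [b' [Hab' ->]]]].
  pose a2 := fun i : 'I_(n + m) => match split i with inl j => a j | inr k => a' k end.
  pose b2 := fun i : 'I_(n + m) => match split i with inl j => b j | inr k => b' k end.
  exists (n + m)%N, a2, b2; split.
    by move=> i; rewrite /a2 /b2; case: (split i).
  rewrite big_split_ord /=; congr (_ + _); apply: eq_bigr => i _.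
    by rewrite /a2 /b2 (unsplitK (inl _ i)).
  by rewrite /a2 /b2 (unsplitK (inr _ i)).
- move=> r x [n [a [b [Hab ->]]]]; exists n, a, (fun i => r * b i); split.
    by move=> i; case: (Hab i) => H1 H2; split => //; apply: BM.
  by rewrite mulr_sumr; apply: eq_bigr => i _; rewrite mulrCA.
Qed.

Lemma ideal_pow_ideal (J : R -> Prop) t : is_ideal J -> is_ideal (ideal_pow J t).
Proof. by case: t => [|t] HJ; [split | apply: ideal_mul_ideal]. Qed.

Lemma ideal_pow_ext (A B : R -> Prop) t : set_eq A B -> set_eq (ideal_pow A t) (ideal_pow B t).
Proof.
move=> HAB; elim: t => [|t IH] x //=; split; move=> [n [a [b [Hab ->]]]];
  exists n, a, b; split => // i; case: (Hab i) => H1 H2; split;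
  by [apply/IH | apply/HAB].
Qed.

End Aux.

Section Poly.
Variable R : idomainType.
Variable f : {poly R}.
Hypothesis fmon : f \is monic.
Hypothesis fsz : (2 <= size f)%N.

Definition Q (A : R -> Prop) (p : {poly R}) :=
  exists g h : {poly R}, (forall i, A g`_i) /\ p = g + f * h.

Lemma Q0 A : is_ideal A -> Q A 0.
Proof. by case=> A0 _ _; exists 0, 0; split; [move=> i; rewrite coef0 | rewrite mulr0 addr0]. Qed.

Lemma QD A p q : is_ideal A -> Q A p -> Q A q -> Q A (p + q).
Proof.
case=> A0 AD AM [g [h [Hg ->]]] [g' [h' [Hg' ->]]].
exists (g + g'), (h + h'); split; first by move=> i; rewrite coefD; apply: AD.
by rewrite mulrDr addrACA.
Qed.

Lemma Qsum A n (F : 'I_n -> {poly R}) : is_ideal A -> (forall i, Q A (F i)) -> Q A (\sum_(i < n) F i).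
Proof.
move=> HA HF; elim: n F HF => [|n IH] F HF; first by rewrite big_ord0; apply: Q0.
rewrite big_ord_recr /=; apply: QD => //; exact: IH.
Qed.

Lemma coef_ideal_mul (A : R -> Prop) (g p : {poly R}) :
  is_ideal A -> (forall i, A g`_i) -> forall i, A (p * g)`_i.
Proof.
move=> HA Hg i; rewrite coefM; apply: ideal_sum => // j.
by case: HA => _ _ AM; apply: AM.
Qed.

Lemma QM (A B : R -> Prop) p q : is_ideal A -> is_ideal B -> Q A p -> Q B q ->
  Q (ideal_mul A B) (p * q).
Proof.
move=> HA HB [g [h [Hg ->]]] [g' [h' [Hg' ->]]].
exists (g * g'), (h * g' + g * h' + f * h * h'); split.
  move=> i; rewrite coefM; apply: ideal_sum; first exact: ideal_mul_ideal.
  move=> j; exists 1%N, (fun _ => g`_j), (fun _ => g'`_(i - j)); split => //.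
  by rewrite big_ord1.
rewrite !mulrDr !mulrDl !addrA; congr (_ + _ + _ + _).
- by rewrite mulrA.
- by rewrite mulrCA.
- by rewrite mulrCA.
Qed.

Lemma Qconst (A : R -> Prop) c : is_ideal A -> Q A c%:P -> A c.
Proof.
move=> HA [g [h [Hg Hc]]].
have [n Hn] : exists n, (size h <= n)%N by exists (size h).
elim: n g h Hg Hc Hn => [|n IH] g h Hg Hc Hn.
  move: Hn; rewrite leqn0 size_poly_eq0 => /eqP h0.
  by rewrite h0 mulr0 addr0 in Hc; move: (Hg 0%N); rewrite -Hc coefC.
have [h0|hn0] := eqVneq h 0.
  subst h.
  by apply: (IH g 0) => //; rewrite size_poly0.
set m := (size h).-1.
have szfh : size (f * h) = (size f + size h).-1 by rewrite size_monicM.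
have hsz : (0 < size h)%N by rewrite size_poly_gt0.
set k := (size (f * h)).-1.
have k0 : k != 0%N.
  rewrite /k szfh; move: fsz hsz; case: (size f) => // [[|[|sf]]] //= _.
  by case: (size h).
have Hk : g`_k + lead_coef h = 0.
  by rewrite -(lead_coef_monicM h fmon) lead_coefE -/k -coefD -Hc coefC (negPf k0).
have Hl : A (lead_coef h).
  have -> : lead_coef h = - g`_k by apply/eqP; rewrite -addr_eq0 addrC Hk.
  exact: ideal_opp.
pose h' := h - (lead_coef h)%:P * 'X^m.
pose g' := g + (lead_coef h)%:P * ('X^m * f).
apply: (IH g' h').
- move=> i; rewrite /g' coefD coefCM; case: HA => _ AD AM; apply: AD => //.
  by rewrite mulrC; apply: AM.
- have E : f * ((lead_coef h)%:P * 'X^m) = (lead_coef h)%:P * ('X^m * f).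
    by rewrite mulrCA [f * _]mulrC.
  by rewrite Hc /g' /h' mulrBr E -addrA; congr (_ + _); rewrite addrC subrK.
- apply/leq_sizeP => j Hj; rewrite /h' coefB coefCM coefXn.
  have szh : size h = m.+1 by rewrite /m prednK.
  case: eqP => [->|jm]; first by rewrite mulr1 lead_coefE -/m subrr.
  rewrite mulr0 subr0; apply: nth_default; rewrite szh ltn_neqAle.
  have mj : (m <= j)%N by apply: leq_trans Hj; rewrite -ltnS -szh.
  rewrite mj andbT; apply/eqP => E; exact: jm (esym E).
Qed.
End Poly.

Section Main.
Variable R : idomainType.
Variable J : R -> Prop.
Variable f : {poly R}.
Hypothesis HJ : is_ideal J.

Lemma I_Q p : ext_plus_principal J f p -> Q f J p.
Proof.
move=> [n [r [s [Hs ->]]]]; apply: Qsum => // i.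
case: (Hs i) => [[c [Jc ->]]|->].
  exists (r i * c%:P), 0; split; last by rewrite mulr0 addr0.
  by move=> k; rewrite coefMC; case: HJ => _ _ AM; apply: AM.
exists 0, (r i); split; last by rewrite add0r mulrC.
by move=> k; rewrite coef0; case: HJ.
Qed.

Lemma pow_Q t p : ideal_pow (ext_plus_principal J f) t p -> Q f (ideal_pow J t) p.
Proof.
elim: t p => [|t IH] p /=.
  by move=> _; exists p, 0; split; [|rewrite mulr0 addr0].
move=> [n [a [b [Hab ->]]]]; apply: Qsum; first exact: ideal_mul_ideal.
move=> i; case: (Hab i) => H1 H2; apply: QM => //; first exact: ideal_pow_ideal.
  exact: IH.
exact: I_Q.
Qed.

Lemma pow_rev t c : ideal_pow J t c -> ideal_pow (ext_plus_principal J f) t c%:P.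
Proof.
elim: t c => [|t IH] c //=.
move=> [n [a [b [Hab ->]]]]; exists n, (fun i => (a i)%:P), (fun i => (b i)%:P); split.
  move=> i; case: (Hab i) => H1 H2; split; first exact: IH.
  exists 1%N, (fun _ => 1), (fun _ => (b i)%:P); split; last by rewrite big_ord1 mul1r.
  by move=> _; left; exists (b i).
by rewrite rmorph_sum; apply: eq_bigr => i _; rewrite -polyCM.
Qed.
End Main.

Theorem theorem3p5 (R : idomainType) (J : R -> Prop) (f : {poly R}) :
  is_ideal J -> f \is monic -> (2 <= size f)%N ->
  power_stable (ext_plus_principal J f) /\
  (forall t : nat, (1 <= t)%N ->
     set_eq (contraction (ideal_pow (ext_plus_principal J f) t)) (ideal_pow J t)).
Proof.
move=> HJ fmon fsz.
have main : forall t, set_eq (contraction (ideal_pow (ext_plus_principal J f) t)) (ideal_pow J t).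
  move=> t c; split; rewrite /contraction.
    by move/(pow_Q HJ) => HQ; apply: (Qconst fmon fsz (ideal_pow_ideal t HJ) HQ).
  exact: pow_rev.
split => // t _ c.
suff E : set_eq (contraction (ext_plus_principal J f)) J.
  by have := ideal_pow_ext t E c; have := main t c; tauto.
move=> x; rewrite /contraction; split.
  by move/(I_Q HJ) => HQ; apply: (Qconst fmon fsz HJ HQ).
by move=> Jx; exists 1%N, (fun _ => 1), (fun _ => x%:P); split;
  [move=> _; left; exists x | rewrite big_ord1 mul1r].
Qed.
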